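(* Let $G$ be a graph of order $n \ge 3$. Suppose that for every vertex $v \in V(G)$ and for all $u \in N(v)$ we have $\deg_{\langle N(v)\rangle}(u) \ge \deg_G(v)/2$. Then $G$ is hamiltonian and $\{1,2\}$-extendable.
   Context: $N(v)$ denotes the open neighbourhood of $v$ and $\langle X\rangle$ the subgraph of $G$ induced by $X \subseteq V(G)$. A graph $G$ is $\{1,2\}$-extendable if for every non-hamiltonian cycle $C$ of $G$ there exists a cycle $C'$ of length $|C|+1$ or $|C|+2$ whose vertex set contains all vertices of $C$. *)

(* Defs.v *)
(* Finite simple graphs as symmetric irreflexive relations on a finType. *)
From mathcomp Require Import all_boot.
Set Implicit Arguments. Unset Strict Implicit. Unset Printing Implicit Defensive.

Section Graphs.
Variable T : finType.
Variable e : rel T.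

Definition simple_graph := symmetric e /\ irreflexive e.

Definition connected_graph := forall x y : T, connect e x y.

Definition nbhd (v : T) : {set T} := [set u | e v u].

Definition deg (v : T) : nat := #|nbhd v|.

(* degree of u in the induced subgraph <X> (for u in X): number of neighbours of u in X *)
Definition deg_in (X : {set T}) (u : T) : nat := #|nbhd u :&: X|.

Definition is_graph_cycle (c : seq T) : Prop :=
  [/\ uniq c, 3 <= size c & cycle e c].

Definition hamiltonian_cycle (c : seq T) : Prop :=
  is_graph_cycle c /\ size c = #|T|.

Definition hamiltonian : Prop := exists c, hamiltonian_cycle c.

Definition extendable12 : Prop :=
  forall c, is_graph_cycle c -> ~ hamiltonian_cycle c ->
    exists c', [/\ is_graph_cycle c',
                   size c' = (size c).+1 \/ size c' = (size c).+2
                 & {subset c <= c'}].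
End Graphs.

(* Main.v *)
Require Import Defs.
From mathcomp Require Import all_boot.
From mathcomp Require Import zify.
From Stdlib Require Import Classical.

Set Implicit Arguments. Unset Strict Implicit. Unset Printing Implicit Defensive.

Section Proof.
Variable T : finType.
Variable e : rel T.
Hypothesis esym : symmetric e.
Hypothesis eirr : irreflexive e.

Lemma rev_rcons_path x s y : path e x (rcons s y) -> path e y (rcons (rev s) x).
Proof.
move=> H.
have E : (fun z => e^~ z) =2 e by move=> a b; exact: esym.
have := rev_path e x (rcons s y).
by rewrite last_rcons belast_rcons rev_cons (eq_path E) H.
Qed.

Lemma next_mid (s1 s2 : seq T) x y :
  uniq (s1 ++ x :: y :: s2) -> next (s1 ++ x :: y :: s2) x = y.
Proof. by move=> U; rewrite -(next_rot (size s1) U x) rot_size_cat /= eqxx. Qed.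

Definition Ext (c : seq T) := exists c',
  [/\ is_graph_cycle e c', size c' = (size c).+1 & {subset c <= c'}].


Lemma ext1 c a u : is_graph_cycle e c -> a \in c -> u \notin c -> e a u ->
  e u (next c a) -> Ext c.
Proof.
case=> Uc Sc Cc ac uc au un.
case: (rot_to ac) => i s Hrot.
have Pc : perm_eq (a :: s) c by rewrite -Hrot perm_rot.
have Cs : cycle e (a :: s) by rewrite -Hrot rot_cycle.
have Us : uniq (a :: s) by rewrite -Hrot rot_uniq.
move: un; rewrite -(next_rot i Uc a) Hrot.
case: s Hrot Pc Cs Us => [|b s] Hrot Pc Cs Us.
  by move: Sc; rewrite -(perm_size Pc).
rewrite /= eqxx => ub.
have Pn : perm_eq [:: a, u, b & s] (u :: c).
  apply: (@perm_trans _ [:: u, a, b & s]).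
    by apply/permP => P /=; rewrite addnCA.
  by rewrite perm_cons.
exists [:: a, u, b & s]; split.
- split.
  + by rewrite (perm_uniq Pn) /= uc Uc.
  + by [].
  + move: Cs; rewrite /= au ub => /andP [_ ->].
    by [].
- by rewrite (perm_size Pn).
- by move=> x xc; rewrite (perm_mem Pn) inE xc orbT.
Qed.


Lemma perm_helper3 (a b o p1 q1 : T) p q :
 perm_eq (a :: rev q ++ q1 :: p1 :: p ++ [:: b; o]) (o :: a :: p1 :: p ++ b :: q1 :: q).
Proof.
apply/permP => P; rewrite /= !count_cat count_rev /= !count_cat /=.
move: (P a) (P b) (P o) (P p1) (P q1) (count P p) (count P q) => [] [] [] [] [] n m /=; lia.
Qed.

Lemma ext3 c a b o : is_graph_cycle e c -> a \in c -> b \in c -> a != b ->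
  o \notin c -> e o a -> e o b -> ~~ e o (next c a) -> ~~ e o (next c b) ->
  e (next c a) (next c b) -> Ext c.
Proof.
case=> Uc Sc Cc ac bc ab oc oa ob na nb nn.
case: (rot_to ac) => i s Hrot.
have Pc : perm_eq (a :: s) c by rewrite -Hrot perm_rot.
have Cs : cycle e (a :: s) by rewrite -Hrot rot_cycle.
have Us : uniq (a :: s) by rewrite -Hrot rot_uniq.
have bs : b \in s.
  by move: bc; rewrite -(perm_mem Pc) inE eq_sym (negbTE ab).
move: na nb nn; rewrite -!(next_rot i Uc) Hrot.
case/splitPr: bs Hrot Pc Cs Us => p q Hrot Pc Cs Us.
case: p Hrot Pc Cs Us => [|p1 p] Hrot Pc Cs Us.
  by rewrite (next_mid (s1 := [::]) Us) ob.
case: q Hrot Pc Cs Us => [|q1 q] Hrot Pc Cs Us.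
  move=> _; rewrite -cat_cons -(next_rot (size (a :: p1 :: p)) Us b) rot_size_cat.
  by rewrite /= eqxx oa.
rewrite (next_mid (s1 := [::]) (x := a)) //.
rewrite -cat_cons (next_mid (s1 := a :: p1 :: p)) //.
move=> _ _ pq.
set c' := a :: rev q ++ q1 :: p1 :: p ++ [:: b; o].
have Pn : perm_eq c' (o :: c).
  apply: (@perm_trans _ (o :: a :: p1 :: p ++ b :: q1 :: q)); last by rewrite perm_cons.
  exact: perm_helper3.
exists c'; split.
- split.
  + by rewrite (perm_uniq Pn) /= oc Uc.
  + by rewrite (perm_size Pn) /= leqW.
  + move: Cs; rewrite /c' /= rcons_cat cat_path /= => /and3P [ap1 pp /and3P [lb bq1 qq]].
    rewrite -cat_rcons rcons_cat cat_path last_rcons (rev_rcons_path qq) /=.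
    rewrite esym pq /= rcons_cat cat_path pp /= lb esym ob oa.
    by [].
- by rewrite (perm_size Pn).
- by move=> x xc; rewrite (perm_mem Pn) inE xc orbT.
Qed.

Lemma cardsU_disj (A B : {set T}) : A :&: B = set0 -> #|A :|: B| = #|A| + #|B|.
Proof. by move=> H; have := cardsUI A B; rewrite H cards0 addn0. Qed.

Lemma card_sep (X : {set T}) (P : pred T) :
  #|[set z in X | P z]| = \sum_(z in X) (P z : nat).
Proof.
rewrite -sum1_card big_mkcond /= [RHS]big_mkcond /=; apply: eq_bigr => z _.
by rewrite !inE; case: (z \in X); case: (P z).
Qed.


Hypothesis loc : forall v u : T, u \in nbhd e v -> deg e v <= 2 * deg_in e (nbhd e v) u.

Lemma counting c o a0 : uniq c -> cycle e c -> o \notin c -> a0 \in c -> e o a0 ->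
  (forall u a, u \notin c -> a \in c -> e u a -> e u (next c a) -> False) ->
  (forall a b, a \in c -> b \in c -> a != b -> e o a -> e o b ->
     e (next c a) (next c b) -> False) ->
  False.
Proof.
move=> Uc Cc oc a0c oa0 H1 H3.
pose nx := next c.
have nxinj : injective nx := can_inj (prev_next Uc).
pose X := [set a | (a \in c) && e o a].
pose R a z := e a z && e (nx a) z.
pose Out a := [set z in X | R a z].
pose In a := [set b in X | R b a].
have key : forall a, a \in X -> #|In a| + 2 <= #|Out a|.
{ move=> a; rewrite inE => /andP [ac oa].
  pose N := nbhd e a.
  pose M := nbhd e o :&: N.
  pose K := nbhd e (nx a) :&: N.
  pose I' := [set nx b | b in In a].
  have oN : o \in N by rewrite inE esym.
  have nN : nx a \in N by rewrite inE; exact: next_cycle.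
  have hM : #|N| <= 2 * #|M| := loc oN.
  have hK : #|N| <= 2 * #|K| := loc nN.
  have hI : #|I'| = #|In a| := card_imset _ nxinj.
  have nac : nx a \in c by rewrite mem_next.
  have MKsub : M :&: K \subset Out a.
  { apply/subsetP => z; rewrite !inE => /andP [/andP [oz az] /andP [nz _]].
    rewrite /R oz az nz !andbT.
    apply/negPn/negP => zc.
    by apply: (H1 z a zc ac); rewrite esym. }
  have hMK := subset_leq_card MKsub.
  have inI : forall y, y \in I' -> exists b, [/\ b \in c, e o b, e b a, e (nx b) a & y = nx b].
  { move=> y /imsetP [b Hb Ey]; move: Hb; rewrite !inE => /andP [/andP [bc ob] /andP [ba nba]].
    by exists b. }
  have d1 : (M :|: K) :&: I' = set0.
  { apply/setP => y; rewrite inE in_set0; apply/negbTE/negP => /andP [H /inI [b [bc ob ba nba E]]].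
    move: H; rewrite E; rewrite !inE => /orP [/andP [onb _] | /andP [nanb _]].
    - by apply: (H1 o b oc bc ob onb).
    - apply: (H3 a b ac bc _ oa ob nanb).
      by apply/negP => /eqP Eab; move: ba; rewrite Eab eirr. }
  have d2 : ((M :|: K) :|: I') :&: [set o; nx a] = set0.
  { apply/setP => y; rewrite inE in_set0; apply/negbTE/negP => /andP [H Hy].
    move: Hy H; rewrite !inE => /orP [] /eqP ->.
    - move=> /orP [/orP [/andP [oo _] | /andP [noo _]] | /inI [b [bc _ _ _ E]]].
      + by rewrite eirr in oo.
      + by apply: (H1 o a oc ac oa); rewrite esym.
      + by move: oc; rewrite E mem_next bc.
    - move=> /orP [/orP [/andP [ona _] | /andP [nn _]] | /inI [b [bc _ ba _ E]]].
      + by apply: (H1 o a oc ac oa).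
      + by rewrite eirr in nn.
      + by move: ba; rewrite -(nxinj _ _ E) eirr. }
  have hS : ((M :|: K) :|: I') :|: [set o; nx a] \subset N.
  { apply/subsetP => y; rewrite !inE => /orP [/orP [/orP [/andP [_ ->] | /andP [_ ->]] | /inI [b [_ _ _ nba ->]]] | /orP [] /eqP ->] //.
    all: try by rewrite esym.
    all: exact: (next_cycle Cc ac). }
  have h2 : #|[set o; nx a]| = 2.
  { rewrite cards2; case: eqP => // E.
    by move: oc; rewrite E nac. }
  have := subset_leq_card hS.
  rewrite (cardsU_disj d2) (cardsU_disj d1) h2 hI => hB.
  have hUI := cardsUI M K.
  move: hM hK hB hUI hMK.
  move: #|N| #|M| #|K| #|M :|: K| #|M :&: K| #|In a| #|Out a| => n m k u i j l.
  lia. }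
have E : \sum_(a in X) #|Out a| = \sum_(a in X) #|In a|.
{ rewrite (eq_bigr (fun a => \sum_(z in X) (R a z : nat))); last by move=> a _; exact: card_sep.
  rewrite exchange_big /=; apply: eq_bigr => z _.
  by rewrite card_sep. }
have hX : 0 < #|X| by apply/card_gt0P; exists a0; rewrite inE a0c oa0.
have : \sum_(a in X) (#|In a| + 2) <= \sum_(a in X) #|Out a| by apply: leq_sum.
rewrite big_split sum_nat_const /= E.
move: hX; move: #|X| (\sum_(i in X) #|In i|) => x y.
lia.
Qed.

Lemma path_exit (c : seq T) p : forall a, a \in c -> path e a p -> last a p \notin c ->
  exists x y, [/\ x \in c, y \notin c & e x y].
Proof.
elim: p => [|y p IH] a ac /=; first by rewrite ac.
case/andP => ay pp lst.
case: (boolP (y \in c)) => yc; first exact: (IH y yc pp lst).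
by exists a, y.
Qed.

Lemma size_le (c : seq T) : uniq c -> size c <= #|T|.
Proof. by move=> Uc; rewrite -(card_uniqP Uc) max_card. Qed.

Lemma extend c : connected_graph e -> is_graph_cycle e c -> size c != #|T| -> Ext c.
Proof.
move=> conn gc; case: (gc) => Uc Sc Cc nh.
have [v vc] : exists v, v \notin c.
{ apply: NNPP => H; move/negP: nh; apply.
  rewrite eqn_leq size_le //= -(card_uniqP Uc).
  apply: subset_leq_card; apply/subsetP => x _.
  apply/negPn/negP => xc; apply: H; by exists x. }
have a0c : nth v c 0 \in c by apply: mem_nth; apply: leq_trans Sc.
case/connectP: (conn (nth v c 0) v) => p pp lst.
have lc : last (nth v c 0) p \notin c by rewrite -lst.
have [x [o [xc oc xo]]] := path_exit a0c pp lc.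
case: (classic (exists u a, [/\ u \notin c, a \in c, e u a & e u (next c a)])).
  by case=> u [a [uc ac ua un]]; apply: (ext1 gc ac uc _ un); rewrite esym.
move=> NP.
have H1 : forall u a, u \notin c -> a \in c -> e u a -> e u (next c a) -> False.
  by move=> u a uc ac ua un; apply: NP; exists u, a.
case: (classic (exists a b, [/\ a \in c, b \in c, a != b, e o a & (e o b /\ e (next c a) (next c b))])).
  case=> a [b [ac bc ab oa [ob nn]]]; apply: (ext3 gc ac bc ab oc oa ob _ _ nn).
  - by apply/negP => hon; apply: (H1 o a oc ac oa hon).
  - by apply/negP => hon; apply: (H1 o b oc bc ob hon).
move=> NP3; exfalso.
apply: (counting Uc Cc oc xc _ H1); first by rewrite esym.
by move=> a b ac bc ab oa ob nn; apply: NP3; exists a, b.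
Qed.

End Proof.

Theorem mainTheorem2 (T : finType) (e : rel T) :
  simple_graph e -> connected_graph e -> 3 <= #|T| ->
  (forall v u : T, u \in nbhd e v -> (deg e v <= 2 * deg_in e (nbhd e v) u)%N) ->
  hamiltonian e /\ extendable12 e.
Proof.
move=> [esym eirr] conn n3 loc.
have ext : forall c, is_graph_cycle e c -> size c != #|T| -> Ext e c.
  by move=> c gc nh; apply: (extend esym eirr loc conn gc nh).
split; last first.
  move=> c gc nh.
  have nh' : size c != #|T| by apply/eqP => E; apply: nh.
  case: (ext c gc nh') => c' [gc' sz sub].
  by exists c'; split => //; left.
have [v _] : exists v : T, v \in T by apply/card_gt0P; apply: leq_trans n3.
have [w wv] : exists w : T, w != v.
{ apply: NNPP => H.
  have : #|T| <= #|pred1 v|.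
    apply: subset_leq_card; apply/subsetP => x _; rewrite inE.
    by apply/negPn/negP => xv; apply: H; exists x.
  by rewrite card1 => /(leq_trans n3). }
case/connectP: (conn v w) => p pp lst.
case: p pp lst => [|u p] /=; first by move=> _ E; rewrite E eqxx in wv.
case/andP => vu _ _.
have uN : u \in nbhd e v by rewrite inE.
have hd := loc v u uN.
have : 0 < deg_in e (nbhd e v) u.
  have : 0 < deg e v by apply/card_gt0P; exists u.
  by move=> h; move: hd; case: (deg_in e (nbhd e v) u) => // ; rewrite muln0 leqNgt h.
case/card_gt0P => x; rewrite !inE => /andP [ux vx].
have gt : is_graph_cycle e [:: v; u; x].
{ split => //=.
  - have n1 : v != u by apply/negP => /eqP E; move: vu; rewrite E eirr.
    have n2 : v != x by apply/negP => /eqP E; move: vx; rewrite E eirr.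
    have n3' : u != x by apply/negP => /eqP E; move: ux; rewrite E eirr.
    by rewrite !inE negb_or n1 n2 n3'.
  - by rewrite vu ux esym vx. }
suff H : forall k c, is_graph_cycle e c -> #|T| - size c <= k -> hamiltonian e.
  exact: (H _ _ gt (leqnn _)).
elim=> [|k IH] c gc hk.
  exists c; split => //; case: gc => Uc _ _.
  by apply/eqP; rewrite eqn_leq size_le //= -subn_eq0 -leqn0.
case: (eqVneq (size c) #|T|) => E.
  by exists c.
case: (ext c gc E) => c' [gc' sz _].
apply: (IH c' gc'); rewrite sz.
case: gc => Uc _ _; move: (size_le Uc) E hk.
move: (size c) #|T| => a b; lia.
Qed.
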